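(* Let $y_1,\dots,y_n$ be $(n-1)$ times continuously differentiable on an open interval $I$. For $h\ne 0$ let $C_n^h(x)$ be the determinant of the $n\times n$ matrix whose $(i,j)$ entry is $y_j(x+(i-1)h)$, and let $W_n(x)$ be the determinant of the $n\times n$ matrix whose $(i,j)$ entry is $y_j^{(i-1)}(x)$, $i,j=1,\dots,n$. Then for every $x\in I$, $$\lim_{h\to 0}\frac{C_n^h(x)}{h^{n(n-1)/2}}=W_n(x).$$ *)

(* Defs.v *)
From HB Require Import structures.
From mathcomp Require Import all_boot all_order all_algebra.
From mathcomp Require Import all_classical all_reals all_analysis.
Set Implicit Arguments. Unset Strict Implicit. Unset Printing Implicit Defensive.
Import Order.TTheory GRing.Theory Num.Theory.
Import numFieldNormedType.Exports.
Local Open Scope ring_scope.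
Local Open Scope classical_set_scope.

Definition Ck_on (R : realType) (k : nat) (I : set R) (f : R -> R) : Prop :=
  (forall m : nat, (m < k)%N -> forall x, I x -> derivable (derive1n m f) x 1) /\
  (forall x, I x -> {for x, continuous (derive1n k f)}).

Definition casorati (R : realType) (n : nat) (y : 'I_n -> R -> R) (h x : R) : R :=
  \det (\matrix_(i < n, j < n) y j (x + i%:R * h)).

Definition wronskian (R : realType) (n : nat) (y : 'I_n -> R -> R) (x : R) : R :=
  \det (\matrix_(i < n, j < n) derive1n i (y j) x).

(* Main.v *)
Require Import Defs.
From HB Require Import structures.
From mathcomp Require Import all_boot all_order all_algebra.
From mathcomp Require Import all_classical all_reals all_analysis.
From mathcomp Require Import lra ring.
Import Order.TTheory GRing.Theory Num.Theory.
Import numFieldNormedType.Exports.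
Local Open Scope ring_scope.
Local Open Scope classical_set_scope.
Set Implicit Arguments. Unset Strict Implicit. Unset Printing Implicit Defensive.
Lemma is_derive_term (R : realType) (x c : R) (k : nat) (u : R) :
  is_derive u (1:R) (fun u : R => c * ((u - x) ^+ k.+1 / k.+1`!%:R))
    (c * ((u - x) ^+ k / k`!%:R)).
Proof.
have h1 : is_derive u (1:R) (fun u : R => u - x) 1.
  have := @is_deriveB R R R id (cst x) u 1 1 0; rewrite subr0; apply.
have h2 := @is_deriveX R R (fun u : R => u - x) k.+1 u 1 1 h1.
have h3 := @is_deriveZ R R R _ (c / k.+1`!%:R) u 1 _ h2.
have -> : (fun u : R => c * ((u - x) ^+ k.+1 / k.+1`!%:R)) =
   (c / k.+1`!%:R) \*: ((fun u : R => u - x) ^+ k.+1).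
  by apply/funext => v /=; rewrite exprfctE /GRing.scale /=; ring.
apply: is_derive_eq h3 _.
rewrite /GRing.scale /= mulr1 factS natrM /= invfM.
field. by rewrite pnatr_eq0 -lt0n fact_gt0 /= addrC natr1 pnatr_eq0.
Qed.

Lemma is_derive_tsum (R : realType) (x u : R) (n : nat) (c : nat -> R) :
  is_derive u (1:R) (fun u : R => \sum_(k < n) c k * ((u - x) ^+ k.+1 / k.+1`!%:R))
    (\sum_(k < n) c k * ((u - x) ^+ k / k`!%:R)).
Proof.
elim: n => [|n IH].
  have -> : (fun u : R => \sum_(k < 0) c k * ((u - x) ^+ k.+1 / k.+1`!%:R)) = cst 0.
    by apply/funext => v; rewrite big_ord0.
  rewrite big_ord0; exact: is_derive_cst.
have -> : (fun u : R => \sum_(k < n.+1) c k * ((u - x) ^+ k.+1 / k.+1`!%:R)) =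
  (fun u : R => \sum_(k < n) c k * ((u - x) ^+ k.+1 / k.+1`!%:R)) +
  (fun u : R => c n * ((u - x) ^+ n.+1 / n.+1`!%:R)).
  by apply/funext => v; rewrite big_ord_recr.
rewrite big_ord_recr /=.
exact: is_deriveD IH (is_derive_term _ _ _ _).
Qed.

Lemma mvt_o (R : realType) (g dg : R -> R) (x : R) (N : nat) :
  (\forall u \near x, is_derive (u : R) (1 : R) g (dg u)) -> g x = 0 ->
  (forall e, 0 < e -> \forall u \near x, `|dg u| <= e * `|u - x| ^+ N) ->
  forall e, 0 < e -> \forall u \near x, `|g u| <= e * `|u - x| ^+ N.+1.
Proof.
move=> Hd gx0 Hb e e0.
have [d d0 Hdd] : nbhs_ball x ((fun u => is_derive u (1:R) g (dg u)) `&` (fun u => `|dg u| <= e * `|u - x| ^+ N)) by apply/nbhs_ballP; apply: filterI; [exact: Hd|exact: Hb].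
apply/nbhs_ballP; exists d => // u xu.
have inb c : `|c - x| <= `|u - x| -> ball x d c.
  move=> cu; rewrite /ball /= distrC; apply: le_lt_trans cu _.
  by move: xu; rewrite /ball /= distrC.
have key c : `|c - x| <= `|u - x| -> `|dg c| * `|u - x| <= e * `|u - x| ^+ N.+1.
  move=> cu; have [_ /= H] := Hdd c (inb c cu).
  rewrite exprSr mulrA ler_wpM2r //; apply: le_trans H _.
  apply: ler_wpM2l; first exact: ltW. by apply: lerXn2r; rewrite ?nnegrE ?normr_ge0.
have drv c : `|c - x| <= `|u - x| -> derivable g c 1.
  by move=> cu; have [H _] := Hdd c (inb c cu); apply: ex_derive.
case: (leP x u) => xu'.
- have H1 : forall c, c \in `]x, u[%R -> is_derive c 1 g (dg c).
    move=> c cI; have cb : ball x d c.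
      apply: inb; move: cI; rewrite in_itv /= => /andP[c1 c2]; rewrite !ger0_norm; lra.
    by have [H _] := Hdd c cb.
  have H2 : {within `[x, u], continuous g}.
    apply: derivable_within_continuous => c cI; apply: drv.
    move: cI; rewrite in_itv /= => /andP[c1 c2]; rewrite !ger0_norm; lra.
  have [c cI eq] := MVT_segment xu' H1 H2.
  move: eq; rewrite gx0 subr0 => ->; rewrite normrM [`|u - x|]ger0_norm ?subr_ge0 //.
  rewrite -[u - x]ger0_norm ?subr_ge0 //; apply: key.
  move: cI; rewrite in_itv /= => /andP[c1 c2]; rewrite !ger0_norm; lra.
- have H1 : forall c, c \in `]u, x[%R -> is_derive c 1 g (dg c).
    move=> c cI; have cb : ball x d c.
      apply: inb; move: cI; rewrite in_itv /= => /andP[c1 c2]; rewrite !ler0_norm; lra.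
    by have [H _] := Hdd c cb.
  have H2 : {within `[u, x], continuous g}.
    apply: derivable_within_continuous => c cI; apply: drv.
    move: cI; rewrite in_itv /= => /andP[c1 c2]; rewrite !ler0_norm; lra.
  have [c cI eq] := MVT_segment (ltW xu') H1 H2.
  move: eq; rewrite gx0 sub0r => /eqP; rewrite eqr_oppLR => /eqP ->.
  rewrite normrN normrM distrC; apply: key.
  move: cI; rewrite in_itv /= => /andP[c1 c2]; rewrite !ler0_norm; lra.
Qed.

Definition taylor (R : realType) (f : R -> R) (N : nat) (x u : R) :=
  \sum_(k < N.+1) derive1n k f x * ((u - x) ^+ k / k`!%:R).

Lemma taylorS (R : realType) (f : R -> R) (N : nat) (x u : R) :
  taylor f N.+1 x u = f x + \sum_(k < N.+1) derive1n k (derive1 f) x * ((u - x) ^+ k.+1 / k.+1`!%:R).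
Proof.
rewrite /taylor big_ord_recl /= expr0 divr1 mulr1; congr (_ + _).
by apply: eq_bigr => i _; rewrite /bump /= add0n add1n -derive1nS derive1Sn.
Qed.

Lemma taylorxx (R : realType) (f : R -> R) (N : nat) (x : R) :
  taylor f N x x = f x.
Proof.
rewrite /taylor big_ord_recl /= expr0 divr1 mulr1 big1 ?addr0 //.
by move=> i _; rewrite subrr expr0n /= mul0r mulr0.
Qed.

Lemma taylor_o (R : realType) (N : nat) : forall (f : R -> R) (x : R),
  (forall m, (m < N)%N -> \forall u \near x, derivable (derive1n m f) u (1:R)) ->
  {for x, continuous (derive1n N f)} ->
  forall e, 0 < e -> \forall u \near x, `|f u - taylor f N x u| <= e * `|u - x| ^+ N.
Proof.
elim: N => [|N IH] f x Hd Hc e e0.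
  move/cvgrPdist_le: Hc => Hc; have := Hc e e0; apply: filterS => u H.
  rewrite expr0 mulr1 /taylor big_ord1 /= expr0 divr1 mulr1 distrC; exact: H.
apply: (@mvt_o R (fun u => f u - taylor f N.+1 x u) (fun u => derive1 f u - taylor (derive1 f) N x u) x N).
- have := Hd 0%N erefl; apply: filterS => u du; rewrite derive1n0 in du.
  have -> : (fun u : R => f u - taylor f N.+1 x u) =
    f - (cst (f x) + (fun u : R => \sum_(k < N.+1) derive1n k (derive1 f) x * ((u - x) ^+ k.+1 / k.+1`!%:R))).
    by apply/funext => v; rewrite taylorS.
  have := is_deriveB (derivableP du) (is_deriveD (is_derive_cst (f x) u 1) (is_derive_tsum x u N.+1 (fun k => derive1n k (derive1 f) x))).
  move=> H; apply: (is_derive_eq H).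
  by rewrite add0r derive1E.
- by rewrite taylorxx subrr.
- move=> e1 e10; apply: IH => //.
  + move=> m mN; rewrite -derive1Sn; exact: Hd.
  + by rewrite -derive1Sn.
- exact: e0.
Qed.

Lemma prod_sub (R : numFieldType) (n : nat) :
  \prod_(i < n) ((n%:R : R) - i%:R) = n`!%:R.
Proof.
elim: n => [|n IH]; first by rewrite big_ord0.
rewrite big_ord_recl /= subr0 factS natrM; congr (_ * _).
rewrite -IH; apply: eq_bigr => i _; rewrite /bump /= add1n -!natr1; ring.
Qed.

Lemma vprod (R : numFieldType) (n : nat) :
  \prod_(i < n) \prod_(j < n | (i < j)%N) ((j%:R : R) - i%:R) = \prod_(k < n) k`!%:R.
Proof.
elim: n => [|n IH]; first by rewrite !big_ord0.
rewrite big_ord_recr /= [X in _ * X]big1 ?mulr1; last first.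
  by move=> j; rewrite ltnNge -ltnS ltn_ord.
rewrite [RHS]big_ord_recr /= -IH -prod_sub -big_split /=.
apply: eq_bigr => i _.
rewrite big_mkcond big_ord_recr /= -big_mkcond /= ltn_ord.
by [].
Qed.

Definition Qm (R : numFieldType) (n : nat) : 'M[R]_n :=
  \matrix_(i < n, k < n) ((i%:R : R) ^+ k / k`!%:R).

Lemma detQ (R : numFieldType) (n : nat) : \det (Qm R n) = 1.
Proof.
rewrite -det_tr.
have -> : (Qm R n)^T = diag_mx (\row_(k < n) (k`!%:R : R)^-1) *m
    Vandermonde n (\row_(i < n) (i%:R : R)).
  by apply/matrixP => k i; rewrite mul_diag_mx /Qm /Vandermonde !mxE mulrC.
rewrite det_mulmx det_diag det_Vandermonde.
under eq_bigr do rewrite mxE.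
rewrite [X in _ * X](eq_bigr (fun i : 'I_n => \prod_(j < n | (i < j)%N) ((j%:R : R) - i%:R))); last by move=> i _; apply: eq_bigr => j _; rewrite !mxE.
rewrite vprod prodfV mulVf //.
by rewrite prodf_seq_neq0; apply/allP => k _ /=; rewrite pnatr_eq0 -lt0n fact_gt0.
Qed.

Lemma sum_ord_tri (n : nat) : (\sum_(k < n) (k : nat))%N = ((n * n.-1) %/ 2)%N.
Proof.
have H : ((\sum_(k < n) (k : nat)).*2 = n * n.-1)%N.
  elim: n => [|n IH]; first by rewrite big_ord0.
  rewrite big_ord_recr /= doubleD IH; case: n {IH} => [|n] //=.
  by rewrite -!mul2n; ring.
by rewrite -H divn2 doubleK.
Qed.


Lemma cvg_sumR (R : realType) (T : Type) (F : set_system T) {FF : Filter F}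
  (I : Type) (r : seq I) (P : pred I) (f : I -> T -> R) (l : I -> R) :
  (forall i, f i @ F --> l i) ->
  (fun t => \sum_(i <- r | P i) f i t) @ F --> \sum_(i <- r | P i) l i.
Proof.
move=> H; elim: r => [|i r IH].
  rewrite big_nil; under eq_fun do rewrite big_nil; exact: cvg_cst.
rewrite big_cons; under eq_fun do rewrite big_cons.
case: (P i) => //; exact: cvgD.
Qed.

Lemma cvg_prodR (R : realType) (T : Type) (F : set_system T) {FF : Filter F}
  (I : Type) (r : seq I) (P : pred I) (f : I -> T -> R) (l : I -> R) :
  (forall i, f i @ F --> l i) ->
  (fun t => \prod_(i <- r | P i) f i t) @ F --> \prod_(i <- r | P i) l i.
Proof.
move=> H; elim: r => [|i r IH].
  rewrite big_nil; under eq_fun do rewrite big_nil; exact: cvg_cst.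
rewrite big_cons; under eq_fun do rewrite big_cons.
case: (P i) => //; exact: cvgM.
Qed.

Lemma cvg_det (R : realType) (T : Type) (F : set_system T) {FF : Filter F}
  (n : nat) (M : T -> 'M[R]_n) (L : 'M[R]_n) :
  (forall i j, (fun t => M t i j) @ F --> L i j) ->
  (fun t => \det (M t)) @ F --> \det L.
Proof.
move=> H; rewrite /determinant.
apply: cvg_sumR => s; apply: cvgM; first exact: cvg_cst.
by apply: cvg_prodR => i; exact: H.
Qed.

Lemma small_o (R : realType) (g : R -> R) (x c : R) (N k : nat) :
  (forall e, 0 < e -> \forall u \near x, `|g u| <= e * `|u - x| ^+ N) ->
  (k <= N)%N ->
  (fun h : R => h ^- k * g (x + c * h)) @ 0^' --> 0.
Proof.
move=> Hg kN; apply/cvgr0Pnorm_le => eps eps0.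
set C := `|c| ^+ N.
have C0 : 0 <= C by rewrite /C exprn_ge0.
set e := eps / (C + 1).
have e0 : 0 < e by rewrite /e divr_gt0 // ltr_wpDl.
have Hc : (fun h : R => x + c * h) @ (nbhs (0:R)) --> x.
  have : (fun h : R => x + c * h) @ (nbhs (0:R)) --> x + c * 0.
    apply: cvgD; first exact: cvg_cst.
    apply: cvgM; first exact: cvg_cst.
    exact: cvg_id.
  by rewrite mulr0 addr0.
have H1 : \forall h \near (0:R), `|g (x + c * h)| <= e * `|x + c * h - x| ^+ N.
  exact: Hc (Hg e e0).
have H2 : \forall h \near (0:R), `|h| <= 1 by apply: nbhs0_le.
have H3 := @nbhs_dnbhs_neq R 0.
have H1' := nbhs_dnbhs H1.
have H2' := nbhs_dnbhs H2.
near=> h.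
have hn0 : h != 0 by near: h.
have hle : `|h| <= 1 by near: h.
have Hgh : `|g (x + c * h)| <= e * `|x + c * h - x| ^+ N by near: h.
have hu : h \is a GRing.unit by rewrite unitfE.
have ah0 : 0 < `|h| by rewrite normr_gt0.
rewrite normrM normrV ?unitfE ?expf_neq0 // normrX.
rewrite (_ : x + c * h - x = c * h) in Hgh; last by rewrite addrC addKr.
rewrite normrM exprMn -/C in Hgh.
have hk0 : 0 <= `|h| ^- k by rewrite invr_ge0 exprn_ge0.
have ht : `|h| ^- k * `|h| ^+ N = `|h| ^+ (N - k).
  by rewrite (exprB kN) ?unitfE ?gt_eqF // mulrC.
apply: le_trans (ler_wpM2l hk0 Hgh) _.
rewrite (_ : `|h| ^- k * (e * (C * `|h| ^+ N)) = e * C * (`|h| ^- k * `|h| ^+ N)); last by ring.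
rewrite ht.
have hNk : `|h| ^+ (N - k) <= 1 by apply: exprn_ile1.
have hNk0 : 0 <= `|h| ^+ (N - k) by rewrite exprn_ge0.
have : e * C <= eps.
  rewrite /e mulrAC ler_pdivrMr ?ltr_wpDl //; nra.
have : 0 <= e * C by rewrite mulr_ge0 // ltW.
nra.
Unshelve. all: by end_near.
Qed.

Unset Implicit Arguments.
Set Strict Implicit.

Theorem mainTheorem7 (R : realType) (I : set R) (hIopen : open I)
  (hIitv : is_interval I) (n : nat) (y : 'I_n -> R -> R)
  (hy : forall j : 'I_n, Ck_on n.-1 I (y j)) (x : R) (hx : I x) :
  (fun h : R => casorati y h x / h ^+ ((n * n.-1) %/ 2)%N) @ 0%R^'
    --> wronskian y x.
Proof.
case: n y hy => [|n] y hy.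
  have -> : (fun h : R => casorati y h x / h ^+ ((0 * 0.-1) %/ 2)%N) = cst 1.
    by apply/funext => h; rewrite /casorati det_mx00 /= expr0 divr1.
  rewrite /wronskian det_mx00; exact: cvg_cst.
have T j : forall e, 0 < e -> \forall u \near x,
    `|y j u - taylor (y j) n x u| <= e * `|u - x| ^+ n.
  case: (hy j) => Hd Hc; apply: taylor_o.
  - move=> m mn; have : nbhs x I by exact: hIopen.
    by apply: filterS => u Iu; exact: Hd m mn u Iu.
  - exact: Hc x hx.
set Q := Qm R n.+1.
set W := \matrix_(i < n.+1, j < n.+1) derive1n i (y j) x.
set E := fun h : R => \matrix_(i < n.+1, j < n.+1)
   (y j (x + i%:R * h) - taylor (y j) n x (x + i%:R * h)).
set F := fun h : R => diag_mx (\row_(k < n.+1) h ^- k) *m (invmx Q *m E h).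
have QU : Q \in unitmx by rewrite unitmxE detQ unitr1.
have key : forall h, h != 0 ->
    casorati y h x / h ^+ ((n.+1 * n.+1.-1) %/ 2)%N = \det (W + F h).
  move=> h h0.
  have A : (\matrix_(i < n.+1, j < n.+1) y j (x + i%:R * h)) =
      Q *m diag_mx (\row_(k < n.+1) h ^+ k) *m (W + F h).
    rewrite mulmxDr.
    have -> : Q *m diag_mx (\row_(k < n.+1) h ^+ k) *m F h = E h.
      rewrite /F !mulmxA.
      have -> : Q *m diag_mx (\row_(k < n.+1) h ^+ k) *m diag_mx (\row_(k < n.+1) h ^- k) = Q.
        rewrite -mulmxA.
        have -> : diag_mx (\row_(k < n.+1) h ^+ k) *m diag_mx (\row_(k < n.+1) h ^- k) = 1%:M.
          apply/matrixP => a b; rewrite mul_diag_mx !mxE.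
          case: eqVneq => [->|]; rewrite ?mulr1n ?mulr0n ?mulr0 //.
          by rewrite mulfV // expf_neq0.
        by rewrite mulmx1.
      by rewrite mulmxV // mul1mx.
    apply/matrixP => i j; rewrite [in RHS]mxE [E h i j]mxE [LHS]mxE.
    suff -> : (Q *m diag_mx (\row_(k < n.+1) h ^+ k) *m W) i j = taylor (y j) n x (x + i%:R * h).
      by rewrite addrC subrK.
    rewrite mxE /taylor; apply: eq_bigr => k _.
    rewrite mul_mx_diag !mxE (addrC x) addrK exprMn; ring.
  rewrite /casorati A det_mulmx det_mulmx detQ mul1r det_diag.
  under eq_bigr do rewrite mxE.
  rewrite prodrXr sum_ord_tri mulrAC mulfV ?mul1r // expf_neq0 //.
apply: (@cvg_trans _ ((fun h => \det (W + F h)) @ 0^')).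
  apply: near_eq_cvg; near=> h; rewrite key //.
  near: h; exact: nbhs_dnbhs_neq.
apply: cvg_det => k j.
have -> : (fun h => (W + F h) k j) = (fun h => W k j + F h k j).
  by apply/funext => h; rewrite [LHS]mxE.
suff G : (fun h => F h k j) @ 0^' --> (0:R).
  by have := cvgD (cvg_cst (W k j)) G; rewrite addr0; apply.
have L : (fun h => F h k j) = (fun h => \sum_(i < n.+1) invmx Q k i * (h ^- k * E h i j)).
  apply/funext => h; rewrite /F mul_diag_mx !mxE mulr_sumr.
  by apply: eq_bigr => i _; ring.
rewrite L.
have S : (fun h => \sum_(i < n.+1) invmx Q k i * (h ^- k * E h i j)) @ 0^' -->
    \sum_(i < n.+1) invmx Q k i * 0.
  apply: cvg_sumR => i; apply: cvgM; first exact: cvg_cst.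
  have := @small_o R (fun u => y j u - taylor (y j) n x u) x i%:R n k (T j).
  rewrite -ltnS; move=> /(_ (ltn_ord k)).
  move=> H; under eq_fun do rewrite /E mxE; exact: H.
rewrite big1 in S; first exact: S.
by move=> i _; rewrite mulr0.
Unshelve. all: by end_near.
Qed.
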